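(* Let $h=\prod_{i=1}^N h_i$ with $h_i\in\bar K[z]$ nonzero, let $h_i=q_i^2+\rho_i$ be part-square decompositions, and set $q=\prod_{i=1}^N q_i$ and $\rho=h-q^2$. Put $t_i=t_{q_i,\rho_i}$ and $t=t_{q,\rho}=v(\rho)-v(h)$, and assume $t_i\ge0$ for all $i$. Then $t\ge\min\{t_1,\dots,t_N\}$. Moreover: (a) if the minimum $\min\{t_1,\dots,t_N\}$ is attained by a unique index $i_0$, then $t=\min\{t_1,\dots,t_N\}$, and the decomposition $h=q^2+\rho$ is good if and only if the decomposition $h_{i_0}=q_{i_0}^2+\rho_{i_0}$ is good; (b) if $N=2$, every root $s_1\in\bar K$ of $h_1$ satisfies $v(s_1)>0$, every root $s_2\in\bar K$ of $h_2$ satisfies $v(s_2)<0$, both decompositions $h_i=q_i^2+\rho_i$ are good, and $\min\{t_1,t_2\}<2v(2)$, then $t=\min\{t_1,t_2\}$ and the decomposition $h=q^2+\rho$ is good.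
   Context: $K$ is a field of characteristic $0$, complete with respect to a discrete valuation $v$ (values in $\mathbb{Q}\cup\{+\infty\}$), with algebraically closed residue field $k$ of characteristic $2$; $v$ extends to a fixed algebraic closure $\bar K$. For nonzero $h(z)=\sum_iH_iz^i\in\bar K[z]$, $v(h)=\min_iv(H_i)$ (Gauss valuation). A part-square decomposition of $h$ is $h=q^2+\rho$ with $q,\rho\in\bar K[z]$, $\deg q\le\lceil\deg h/2\rceil$; $t_{q,\rho}=v(\rho)-v(h)$. A decomposition $h=q^2+\rho$ is good if either $t_{q,\rho}\ge2v(2)$, or $t_{q,\rho}<2v(2)$ and there is no part-square decomposition $h=\tilde q^2+\tilde\rho$ with $t_{\tilde q,\tilde\rho}>t_{q,\rho}$. *)

(* Defs.v *)
From HB Require Import structures.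
From mathcomp Require Import all_boot all_order all_algebra.
From mathcomp Require Import constructive_ereal.
Set Implicit Arguments. Unset Strict Implicit. Unset Printing Implicit Defensive.
Import Order.TTheory GRing.Theory Num.Theory.
Local Open Scope ring_scope.
Local Open Scope ereal_scope.

Definition is_valuation (F : fieldType) (v : F -> \bar rat) : Prop :=
  [/\ forall x : F, v x = +oo <-> x = 0%R,
      forall x : F, x != 0%R -> exists r : rat, v x = r%:E,
      forall x y : F, v (x * y)%R = v x + v y &
      forall x y : F, Order.min (v x) (v y) <= v (x + y)%R].

(* Standing setting: Kbar is an algebraic closure of K (a subfield of Kbar,
   given as a predicate), K has characteristic 0, v is a valuation on Kbar
   whose restriction to K is discrete (value group c Z, c > 0), K is complete
   w.r.t. v, the residue field of K is algebraically closed and has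
   characteristic 2 (i.e. v(2) > 0). *)
Record setting (Kbar : closedFieldType) (K : {pred Kbar}) (v : Kbar -> \bar rat)
  : Prop := Setting {
  char0 : [pchar Kbar] =i pred0;
  K1 : (1%R : Kbar) \in K;
  KB : forall x y, x \in K -> y \in K -> (x - y)%R \in K;
  KM : forall x y, x \in K -> y \in K -> (x * y)%R \in K;
  KV : forall x, x \in K -> x^-1%R \in K;
  Kbar_alg : forall x : Kbar, exists p : {poly Kbar},
      [/\ p != 0%R, p \is a polyOver K & root p x];
  v_val : is_valuation v;
  v_discrete : exists c : rat, [/\ (0 < c)%R,
      forall x, x \in K -> x != 0%R -> exists n : int, v x = (n%:~R * c)%R%:E &
      exists x, x \in K /\ v x = c%:E];
  K_complete : forall u : nat -> Kbar, (forall n, u n \in K) ->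
      (forall M : rat, exists N, forall m n, (N <= m)%N -> (N <= n)%N ->
          M%:E <= v (u m - u n)%R) ->
      exists l, l \in K /\
      (forall M : rat, exists N, forall n, (N <= n)%N -> M%:E <= v (u n - l)%R);
  residue_alg_closed : forall p : {poly Kbar}, p \is monic ->
      (forall i, p`_i \in K /\ 0 <= v p`_i) -> (1 < size p)%N ->
      exists a, [/\ a \in K, 0 <= v a & 0 < v p.[a]];
  residue_char2 : 0 < v 2%R
}.

Definition gaussv (F : fieldType) (v : F -> \bar rat) (h : {poly F}) : \bar rat :=
  \big[Order.min/+oo]_(i < size h) v h`_i.

(* part-square decomposition h = q^2 + rho with deg q <= ceil(deg h / 2) *)
Definition part_square (F : fieldType) (h q rho : {poly F}) : Prop :=
  h = (q ^+ 2 + rho)%R /\ (size q <= (uphalf (size h).-1).+1)%N.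

Definition tqr (F : fieldType) (v : F -> \bar rat) (h rho : {poly F}) : \bar rat :=
  gaussv v rho - gaussv v h.

Definition good (F : fieldType) (v : F -> \bar rat) (h q rho : {poly F}) : Prop :=
  h = (q ^+ 2 + rho)%R /\
  (2%:E * v 2%R <= tqr v h rho \/
   (tqr v h rho < 2%:E * v 2%R /\
    ~ exists q' rho', part_square h q' rho' /\ tqr v h rho < tqr v h rho')).

(* Main.v *)
Require Import Defs.
From HB Require Import structures.
From mathcomp Require Import all_boot all_order all_algebra.
From mathcomp Require Import constructive_ereal.
From mathcomp Require Import ring lra zify.
Import Order.TTheory GRing.Theory Num.Theory.
Set Implicit Arguments. Unset Strict Implicit. Unset Printing Implicit Defensive.
Local Open Scope ring_scope.
Local Open Scope ereal_scope.

Section ExtArith.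
Implicit Types (x y : \bar rat) (r s : rat).

Lemma addge r s x y : r%:E <= x -> s%:E <= y -> (r + s)%:E <= x + y.
Proof. by move=> h1 h2; rewrite EFinD; apply: leeD. Qed.

Lemma addgt r s x y : r%:E <= x -> s%:E < y -> (r + s)%:E < x + y.
Proof. by move=> h1 h2; rewrite EFinD; apply: lee_ltD. Qed.

Lemma addgt' r s x y : r%:E < x -> s%:E <= y -> (r + s)%:E < x + y.
Proof. by move=> h1 h2; rewrite addrC addeC; apply: addgt. Qed.

End ExtArith.

Lemma arNA1 (a tau e w2 : rat) : (e < (a + tau) / 2)%R -> (tau < 2 * w2)%R ->
  (w2 + (a / 2 + e) <= e + e)%R -> False.
Proof. move=> *; lra. Qed.

Lemma arNA2 (a tau e w2 : rat) : (e < (a + tau) / 2)%R ->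
  (a + tau <= e + e)%R -> False.
Proof. move=> *; lra. Qed.

Lemma ar_half (r m : rat) : (r <= m + m)%R -> (r / 2 <= m)%R.
Proof. move=> *; lra. Qed.

Lemma ar_AC1 (a tau w2 : rat) : (tau < 2 * w2)%R -> (0 < w2)%R ->
  (a + tau < w2 + (a / 2 + (a + tau) / 2))%R.
Proof. move=> *; lra. Qed.

Lemma ar_AC2 (a tau w2 : rat) : (0 < w2)%R ->
  (a + tau < w2 + ((a + tau) / 2 + (a + tau) / 2))%R.
Proof. move=> *; lra. Qed.

Lemma ar_TR1 (a tau e w2 : rat) : (e <= (a + tau) / 2)%R -> (tau < 2 * w2)%R ->
  (e + e <= w2 + (a / 2 + e))%R.
Proof. move=> *; lra. Qed.

Lemma ar_TR3 (a tau e : rat) : (e <= (a + tau) / 2)%R -> (e + e <= a + tau)%R.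
Proof. move=> *; lra. Qed.

Lemma ar_half2 (L : rat) : (L <= L / 2 + L / 2)%R.
Proof. lra. Qed.

Lemma ar_hh (A : rat) : (A / 2 + A / 2 = A)%R.
Proof. by apply/eqP; rewrite eq_le; apply/andP; split; lra. Qed.

Lemma ar_TRANS (L0 A w2 : rat) : (0 < w2)%R -> (L0 + A < L0 + (w2 + (A / 2 + A / 2)))%R.
Proof. move=> *; lra. Qed.

Lemma le_subE (r a : rat) y : (r%:E <= y - a%:E) = ((r + a)%:E <= y).
Proof.
case: y => [s||] /=; first by rewrite -EFinD lee_fin lerBrDr.
  by rewrite !leey.
by rewrite !leeNy_eq.
Qed.
Lemma lt_subE (r a : rat) y : (r%:E < y - a%:E) = ((r + a)%:E < y).
Proof.
case: y => [s||] /=; first by rewrite -EFinD lte_fin ltrBrDr.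
  by rewrite !ltey.
by rewrite !ltNge !leNye.
Qed.
Lemma le_by_rat (x y : \bar rat) : (forall r : rat, r%:E <= x -> r%:E <= y) -> x <= y.
Proof.
case: x => [r||] h.
- exact: h.
- case: y h => [s||] h //.
  by move: (h (s + 1)%R (leey _)); clear h; rewrite lee_fin => hh; exfalso; lra.
  by have := h 0%R (leey _).
- by rewrite leNye.
Qed.

Lemma ar_lt_w (x w : rat) : (0 < w)%R -> (x < w + (x / 2 + x / 2))%R.
Proof. move=> *; lra. Qed.

Lemma ar_lt_pos (x t : rat) : (0 < t)%R -> (x < x + t)%R.
Proof. move=> *; lra. Qed.

Lemma ar_lt_w' (x w t : rat) : (0 < w)%R -> (0 < t)%R -> (x < w + (x / 2 + x / 2))%R.
Proof. move=> *; lra. Qed.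

Lemma ar_pos_lt (b t w : rat) : (0 < t)%R -> (b < b + t)%R.
Proof. move=> *; lra. Qed.

Lemma ud_lemma d : ~~ odd d -> ((uphalf d).*2 = d)%N.
Proof.
move=> hd; have := odd_double_half d.+1; rewrite -uphalfE /= (negbTE hd) /=.
move: (uphalf d) => u e'; lia.
Qed.

Lemma kd_lemma (k d sr sq sq2 u : nat) : (k < sr)%N -> (sr <= maxn d.+1 sq2)%N ->
  (sq2 <= (sq + sq).-1)%N -> (sq <= u.+1)%N -> (u.*2 = d)%N -> k != d -> (k < d)%N.
Proof. move=> h1 h2 h3 h4 h5 /eqP h6; lia. Qed.

Section Val.
Variable F : fieldType.
Variable v : F -> \bar rat.
Hypothesis hv : is_valuation v.

Lemma v0 : v 0%R = +oo.
Proof. by case: hv => h _ _ _; exact: (proj2 (h 0%R) erefl). Qed.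

Lemma vfin x : (x != 0)%R -> exists r, v x = r%:E.
Proof. by case: hv => _ h _ _; apply: h. Qed.

Lemma vM x y : v (x * y)%R = v x + v y.
Proof. by case: hv. Qed.

Lemma vD x y : Order.min (v x) (v y) <= v (x + y)%R.
Proof. by case: hv. Qed.

Lemma vinf x : v x = +oo -> x = 0%R.
Proof. by case: hv => h _ _ _; exact: (proj1 (h x)). Qed.

Lemma v1 : v 1%R = 0%:E.
Proof.
have [r hr] := vfin (oner_neq0 F).
have := vM 1 1; rewrite mulr1 hr -EFinD => -[] e.
by congr (_%:E); lra.
Qed.

Lemma vN1 : v (-1)%R = 0%:E.
Proof.
have [r hr] : exists r, v (-1) = r%:E by apply: vfin; rewrite oppr_eq0 oner_neq0.
have := vM (-1) (-1); rewrite mulrNN mulr1 v1 hr -EFinD => -[] e.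
by congr (_%:E); lra.
Qed.

Lemma vN x : v (- x)%R = v x.
Proof. by rewrite -mulN1r vM vN1 add0e. Qed.

Lemma vnotninf x : v x != -oo.
Proof.
have [->|/vfin [r ->]] := eqVneq x 0%R; by rewrite ?v0.
Qed.

Lemma vD_ge r x y : r%:E <= v x -> r%:E <= v y -> r%:E <= v (x + y)%R.
Proof. by move=> h1 h2; apply: le_trans (vD x y); rewrite le_min h1 h2. Qed.

Lemma vD_gt r x y : r%:E < v x -> r%:E < v y -> r%:E < v (x + y)%R.
Proof. by move=> h1 h2; apply: lt_le_trans (vD x y); rewrite lt_min h1 h2. Qed.

Lemma vB_ge r x y : r%:E <= v x -> r%:E <= v y -> r%:E <= v (x - y)%R.
Proof. by move=> h1 h2; apply: vD_ge => //; rewrite vN. Qed.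

Lemma vB_gt r x y : r%:E < v x -> r%:E < v y -> r%:E < v (x - y)%R.
Proof. by move=> h1 h2; apply: vD_gt => //; rewrite vN. Qed.

Lemma vD_eq r x y : v x = r%:E -> r%:E < v y -> v (x + y)%R = r%:E.
Proof.
move=> hx hy; apply/eqP; rewrite eq_le; apply/andP; split; last first.
  by rewrite -hx; apply: le_trans (vD x y); rewrite le_min lexx hx (ltW hy).
rewrite leNgt; apply/negP => h.
have : r%:E < v (x + y - y)%R by apply: vB_gt.
by rewrite addrK hx ltxx.
Qed.

Lemma vM_ge r s x y : r%:E <= v x -> s%:E <= v y -> (r + s)%:E <= v (x * y)%R.
Proof. by move=> h1 h2; rewrite vM; apply: addge. Qed.

Lemma vM_gt r s x y : r%:E <= v x -> s%:E < v y -> (r + s)%:E < v (x * y)%R.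
Proof. by move=> h1 h2; rewrite vM; apply: addgt. Qed.

Lemma vM_gt' r s x y : r%:E < v x -> s%:E <= v y -> (r + s)%:E < v (x * y)%R.
Proof. by move=> h1 h2; rewrite vM; apply: addgt'. Qed.

Lemma vsum_ge r (I : Type) (s : seq I) (P : pred I) (G : I -> F) :
  (forall i, P i -> r%:E <= v (G i)) -> r%:E <= v (\sum_(i <- s | P i) G i)%R.
Proof.
move=> h; apply: (big_ind (fun y => r%:E <= v y)) => //.
- by rewrite v0 leey.
- by move=> ? ?; apply: vD_ge.
Qed.

Lemma vsum_gt r (I : Type) (s : seq I) (P : pred I) (G : I -> F) :
  (forall i, P i -> r%:E < v (G i)) -> r%:E < v (\sum_(i <- s | P i) G i)%R.
Proof.
move=> h; apply: (big_ind (fun y => r%:E < v y)) => //.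
- by rewrite v0 ltey.
- by move=> ? ?; apply: vD_gt.
Qed.

Definition ge (f : {poly F}) (x : rat) := forall i, x%:E <= v f`_i.
Definition gt (f : {poly F}) (x : rat) := forall i, x%:E < v f`_i.
Definition val_at (f : {poly F}) (x : rat) := ge f x /\ exists i, v f`_i = x%:E.

Lemma gt_ge f x : gt f x -> ge f x.
Proof. by move=> h i; apply: ltW. Qed.

Lemma ge_mono f x y : ge f x -> (y <= x)%R -> ge f y.
Proof. by move=> h hl i; apply: le_trans (h i); rewrite lee_fin. Qed.

Lemma gt_mono f x y : gt f x -> (y <= x)%R -> gt f y.
Proof. by move=> h hl i; apply: le_lt_trans (h i); rewrite lee_fin. Qed.

Lemma gt_ge_mono f x y : ge f x -> (y < x)%R -> gt f y.
Proof. by move=> h hl i; apply: lt_le_trans (h i); rewrite lte_fin. Qed.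

Lemma ge0 x : ge 0%R x.
Proof. by move=> i; rewrite coef0 v0 leey. Qed.

Lemma gt0 x : gt 0%R x.
Proof. by move=> i; rewrite coef0 v0 ltey. Qed.

Lemma ge_add f g x : ge f x -> ge g x -> ge (f + g)%R x.
Proof. by move=> h1 h2 i; rewrite coefD; apply: vD_ge. Qed.

Lemma gt_add f g x : gt f x -> gt g x -> gt (f + g)%R x.
Proof. by move=> h1 h2 i; rewrite coefD; apply: vD_gt. Qed.

Lemma ge_opp f x : ge f x -> ge (- f)%R x.
Proof. by move=> h i; rewrite coefN vN. Qed.

Lemma gt_opp f x : gt f x -> gt (- f)%R x.
Proof. by move=> h i; rewrite coefN vN. Qed.

Lemma ge_sub f g x : ge f x -> ge g x -> ge (f - g)%R x.
Proof. by move=> h1 h2; apply: ge_add => //; apply: ge_opp. Qed.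

Lemma gt_sub f g x : gt f x -> gt g x -> gt (f - g)%R x.
Proof. by move=> h1 h2; apply: gt_add => //; apply: gt_opp. Qed.

Lemma ge_mul f g x y : ge f x -> ge g y -> ge (f * g)%R (x + y).
Proof. by move=> h1 h2 i; rewrite coefM; apply: vsum_ge => j _; apply: vM_ge. Qed.

Lemma gt_mul f g x y : ge f x -> gt g y -> gt (f * g)%R (x + y).
Proof. by move=> h1 h2 i; rewrite coefM; apply: vsum_gt => j _; apply: vM_gt. Qed.

Lemma gt_mul' f g x y : gt f x -> ge g y -> gt (f * g)%R (x + y).
Proof. by move=> h1 h2 i; rewrite coefM; apply: vsum_gt => j _; apply: vM_gt'. Qed.

Lemma ge_C c x : x%:E <= v c -> ge c%:P x.
Proof. by move=> h i; rewrite coefC; case: eqP => // _; rewrite v0 leey. Qed.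

Lemma gt_C c x : x%:E < v c -> gt c%:P x.
Proof. by move=> h i; rewrite coefC; case: eqP => // _; rewrite v0 ltey. Qed.

Lemma ge_scale c f r x : r%:E <= v c -> ge f x -> ge (c *: f)%R (r + x).
Proof. by move=> h1 h2 i; rewrite coefZ; apply: vM_ge. Qed.

Lemma ge_X f x : ge f x -> ge ('X * f)%R x.
Proof. by move=> h i; rewrite coefXM; case: eqP => // _; rewrite v0 leey. Qed.

Lemma gt_X f x : gt f x -> gt ('X * f)%R x.
Proof. by move=> h i; rewrite coefXM; case: eqP => // _; rewrite v0 ltey. Qed.

Lemma ge_1 : ge 1%R 0.
Proof. by apply: ge_C; rewrite v1. Qed.


Lemma gaussv_ge f x : x%:E <= gaussv v f <-> ge f x.
Proof.
rewrite /gaussv; split.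
  move/bigmin_geP => [_ h] i.
  have [hi|hi] := ltnP i (size f); first exact: (h (Ordinal hi)).
  by rewrite nth_default // v0 leey.
move=> h; apply/bigmin_geP; split; first by rewrite leey.
by move=> i _; apply: h.
Qed.

Lemma gaussv_attained f : f != 0%R -> exists i, gaussv v f = v f`_i.
Proof.
move=> fn0; have hs : (0 < size f)%N by rewrite size_poly_gt0.
case: (eq_bigmin (Ordinal hs) (fun _ => true)
   (fun i : 'I_(size f) => v f`_i) erefl (fun i _ => leey _)) => i _ e.
by exists i; rewrite /gaussv e.
Qed.

Lemma gaussv_le f i : gaussv v f <= v f`_i.
Proof.
rewrite /gaussv; have [hi|hi] := ltnP i (size f).
  exact: (bigmin_le _ (Ordinal hi) (fun i : 'I_(size f) => v f`_i)).
by rewrite nth_default // v0 leey.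
Qed.

Lemma exists_val f : f != 0%R -> exists x, val_at f x /\ gaussv v f = x%:E.
Proof.
move=> fn0; have [i hi] := gaussv_attained fn0.
have [r hr] : exists r, v f`_i = r%:E.
  apply: vfin; apply/eqP => hz.
  have := gaussv_le f (size f).-1; rewrite hi hz v0.
  have hl : lead_coef f != 0%R by rewrite lead_coef_eq0.
  rewrite -lead_coefE; have [r hr] := vfin hl.
  by rewrite hr leNgt ltey.
exists r; split; last by rewrite hi.
split; last by exists i.
by apply/gaussv_ge; rewrite hi hr.
Qed.

Lemma val_at_gaussv f x : val_at f x -> gaussv v f = x%:E.
Proof.
move=> [hge [i hi]]; apply/eqP; rewrite eq_le; apply/andP; split.
  by rewrite -hi gaussv_le.
exact/gaussv_ge.
Qed.

Lemma val_at_uniq f x y : val_at f x -> val_at f y -> x = y.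
Proof. by move=> /val_at_gaussv h1 /val_at_gaussv; rewrite h1 => -[]. Qed.

Lemma val_at_neq0 f x : val_at f x -> f != 0%R.
Proof. by move=> [_ [i hi]]; apply/eqP => fz; move: hi; rewrite fz coef0 v0. Qed.

Lemma gaussv_gt f x : x%:E < gaussv v f <-> gt f x.
Proof.
split.
  by move=> h i; apply: lt_le_trans h (gaussv_le f i).
move=> h; have [->|fn0] := eqVneq f 0%R.
  by rewrite /gaussv size_poly0 big_ord0 ltey.
by have [i ->] := gaussv_attained fn0.
Qed.

Lemma not_ge f x : ~ ge f x -> exists i, v f`_i < x%:E.
Proof.
move=> h; have [fz|fn0] := eqVneq f 0%R.
  by exfalso; apply: h; rewrite fz; exact: ge0.
have [i hi] := gaussv_attained fn0; exists i; rewrite -hi ltNge.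
by apply/negP => /gaussv_ge.
Qed.

Lemma gauss_exact f g x y : val_at f x -> val_at g y -> val_at (f * g)%R (x + y).
Proof.
move=> [hf ef] [hg eg]; split; first exact: ge_mul.
have ef' : exists n, v f`_n == x%:E by case: ef => n hn; exists n; apply/eqP.
have eg' : exists n, v g`_n == y%:E by case: eg => n hn; exists n; apply/eqP.
case: (ex_minnP ef') => i /eqP hi mi.
case: (ex_minnP eg') => j /eqP hj mj.
exists (i + j)%N; rewrite coefM.
have hik : (i < (i + j).+1)%N by rewrite ltnS leq_addr.
rewrite (bigD1 (Ordinal hik)) //= addKn.
apply: vD_eq; first by rewrite vM hi hj.
apply: vsum_gt => k hk.
have hk' : (k : nat) != i by move: hk => /eqP hk; apply/eqP => e; apply: hk; apply: val_inj.
have [lt|gt'] := ltnP k i.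
  apply: vM_gt' => //.
  rewrite lt_neqAle hf andbT; apply/eqP => e.
  by have := mi k (introT eqP (esym e)); rewrite leqNgt lt.
have lt : (i < k)%N by rewrite ltn_neqAle eq_sym hk' gt'.
apply: vM_gt => //.
have hlt : (i + j - k < j)%N.
  by move: (ltn_ord k) lt; move: (nat_of_ord k) => kk; lia.
rewrite lt_neqAle hg andbT; apply/eqP => e.
by have := mj _ (introT eqP (esym e)); rewrite leqNgt hlt.
Qed.

Lemma exists_val' f : f != 0%R -> exists x, val_at f x.
Proof. by move=> /exists_val [x [h _]]; exists x. Qed.

Lemma ge_half f x : ge (f ^+ 2)%R x -> ge f (x / 2)%R.
Proof.
move=> h; have [->|fn0] := eqVneq f 0%R; first exact: ge0.
have [m hm] := exists_val' fn0.
have [_ [k hk]] := gauss_exact hm hm.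
have := h k; rewrite expr2 hk lee_fin => hx.
have hxm : (x / 2 <= m)%R by lra.
exact: ge_mono (proj1 hm) hxm.
Qed.

Lemma val_at_half f x : val_at (f ^+ 2)%R x -> val_at f (x / 2)%R.
Proof.
move=> h; have fn0 : f != 0%R.
  by apply/eqP => fz; move: (val_at_neq0 h); rewrite fz expr2 mulr0 eqxx.
have [m hm] := exists_val' fn0.
have := gauss_exact hm hm; rewrite -expr2 => h2.
have e := val_at_uniq h h2; rewrite e.
suff -> : ((m + m) / 2 = m)%R by [].
apply/eqP; rewrite eq_le; apply/andP; split; lra.
Qed.

Lemma sq_decomp d : exists E C : {poly F},
  [/\ (d ^+ 2 = E + C *+ 2)%R,
      forall k, odd k -> E`_k = 0%R,
      forall i, E`_i.*2 = (d`_i ^+ 2)%R &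
      forall x, ge d x -> ge C (x + x)].
Proof.
elim/poly_ind: d => [|p c [E [C [hp hodd hev hC]]]].
  exists 0%R, 0%R; split.
  - by rewrite expr2 mul0r mul0rn addr0.
  - by move=> k _; rewrite coef0.
  - by move=> i; rewrite !coef0 expr2 mul0r.
  - by move=> x _; apply: ge0.
exists (E * 'X^2 + (c ^+ 2)%:P)%R, (C * 'X^2 + c%:P * p * 'X)%R; split.
- have -> : ((p * 'X + c%:P) ^+ 2 = p ^+ 2 * 'X^2 + (c%:P * p * 'X) *+ 2 + (c ^+ 2)%:P)%R.
    by rewrite (rmorphXn polyC); ring.
  by rewrite hp; ring.
- move=> k hk; rewrite coefD coefMXn coefC.
  case: k hk => [//|[|k]] hk /=; first by rewrite addr0.
  by rewrite addr0 subn2 /= hodd //; move: hk => /=; rewrite negbK.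
- move=> i; rewrite coefD coefMXn coefC coefD coefMX coefC.
  case: i => [|i] /=; first by rewrite !add0r.
  by rewrite !addr0 doubleS subn2 /= hev.
- move=> x hx.
  have hp' : ge p x by move=> i; have := hx i.+1; rewrite coefD coefMX coefC /= addr0.
  have hc : x%:E <= v c by have := hx 0%N; rewrite coefD coefMX coefC /= add0r.
  apply: ge_add.
    move=> i; rewrite coefMXn; case: ifP => _; first by rewrite v0 leey.
    exact: hC.
  rewrite -mulrA; move=> i; rewrite coefCM; apply: vM_ge => //.
  by rewrite coefMX; case: eqP => _; [rewrite v0 leey | apply: hp'].
Qed.

Section W2.
Variable w2 : rat.
Hypothesis hw2 : v 2%R = w2%:E.
Hypothesis w2pos : (0 < w2)%R.

Definition oddsmall (f : {poly F}) (L : rat) := forall k, odd k -> L%:E < v f`_k.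

Lemma ge_2 f x : ge f x -> ge (f *+ 2)%R (w2 + x).
Proof. by move=> h i; rewrite coefMn -mulr_natl vM hw2; apply: addge. Qed.

Lemma gt_2 f x : gt f x -> gt (f *+ 2)%R (w2 + x).
Proof. by move=> h i; rewrite coefMn -mulr_natl vM hw2; apply: addgt. Qed.

Lemma sq_odd d x k : ge d x -> odd k -> (w2 + (x + x))%:E <= v (d ^+ 2)%R`_k.
Proof.
move=> hd hk; have [E [C [-> hodd _ hC]]] := sq_decomp d.
by rewrite coefD hodd // add0r; apply: ge_2; apply: hC.
Qed.

Lemma NA h q q' rho rho' a tau :
  h = (q ^+ 2 + rho)%R -> h = (q' ^+ 2 + rho')%R ->
  ge q (a / 2) -> ge q' (a / 2) -> ge rho (a + tau) -> gt rho' (a + tau) ->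
  (0 <= tau)%R -> (tau < 2 * w2)%R -> oddsmall rho (a + tau).
Proof.
move=> e1 e2 hq hq' hr hr' t0 t2 k hk.
set d := (q' - q)%R.
have erho : rho = (rho' + (q * d) *+ 2 + d ^+ 2)%R.
  have : (q ^+ 2 + rho = q' ^+ 2 + rho')%R by rewrite -e1 -e2.
  rewrite /d => e; apply/eqP; rewrite -subr_eq0; apply/eqP.
  have -> : rho = (q' ^+ 2 + rho' - q ^+ 2)%R by rewrite -e; ring.
  ring.
have hd2 : ge d (a / 2) by apply: ge_sub.
case: (boolP (((a + tau) / 2)%:E <= gaussv v d)) => [/gaussv_ge hd|hd].
  rewrite erho coefD coefD.
  apply: vD_gt; first apply: vD_gt.
  - exact: hr'.
  - have := ge_2 (ge_mul hq hd) k => h1; apply: lt_le_trans h1; rewrite lte_fin; lra.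
  - have := sq_odd hd hk => h1; apply: lt_le_trans h1; rewrite lte_fin; lra.
exfalso.
have [i hi] : exists i, v d`_i < ((a + tau) / 2)%:E.
  by apply: not_ge => /gaussv_ge hh; rewrite hh in hd.
have dn0 : d != 0%R by apply/eqP => dz; move: hi; rewrite dz coef0 v0.
have [e he] := exists_val' dn0.
have ee' : e%:E < ((a + tau) / 2)%:E.
  by apply: le_lt_trans hi; apply: (proj1 he).
have ee : (e < (a + tau) / 2)%R by move: ee'; rewrite lte_fin.
have [_ [k' hk']] := gauss_exact he he.
have ed : (d * d = rho - rho' - (q * d) *+ 2)%R by rewrite erho -expr2; ring.
move: hk'; rewrite ed => hk'.
have hA : ge (rho - rho')%R (a + tau) by apply: ge_sub => //; apply: gt_ge.
have hB : ge ((q * d) *+ 2)%R (w2 + (a / 2 + e)) by apply: ge_2; apply: ge_mul => //; case: he.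
have [hle|hlt] := lerP (w2 + (a / 2 + e)) (a + tau).
  have := ge_sub (ge_mono hA hle) hB k'; rewrite hk' lee_fin => h'.
  exact: arNA1 ee t2 h'.
have := ge_sub hA (ge_mono hB (ltW hlt)) k'; rewrite hk' lee_fin => h'.
exact: arNA2 ee h'.
Qed.

Lemma v_half y z r : (z ^+ 2)%R = y -> r%:E <= v y -> (r / 2)%:E <= v z.
Proof.
move=> <-; rewrite expr2 vM.
have [->|zn0] := eqVneq z 0%R; first by move=> _; rewrite v0; exact: leey.
have [m ->] := vfin zn0; rewrite -EFinD !lee_fin; exact: ar_half.
Qed.

Hypothesis hsqrt : forall x : F, exists y : F, (y ^+ 2)%R = x.

Lemma hsqrt' x : exists y : F, (y ^+ 2)%R == x.
Proof. by have [y hy] := hsqrt x; exists y; apply/eqP. Qed.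

Definition sqr (x : F) : F := xchoose (hsqrt' x).

Lemma sqrE x : (sqr x ^+ 2)%R = x.
Proof. exact/eqP/(xchooseP (hsqrt' x)). Qed.

Lemma sqr0 : sqr 0%R = 0%R.
Proof. by have := sqrE 0%R; move/eqP; rewrite expf_eq0 => /andP [_ /eqP]. Qed.

Lemma AC h q rho a tau :
  h = (q ^+ 2 + rho)%R -> ge q (a / 2) -> ge rho (a + tau) ->
  oddsmall rho (a + tau) -> (tau < 2 * w2)%R ->
  exists s, gt (h - (q + s) ^+ 2)%R (a + tau) /\
            (forall i, (size rho <= i.*2)%N -> s`_i = 0%R).
Proof.
move=> eh hq hr hodd t2.
set L := (a + tau)%R.
set s := (\poly_(i < size rho) sqr rho`_i.*2)%R.
have hs : ge s (L / 2).
  move=> i; rewrite coef_poly; case: ifP => _; last by rewrite v0 leey.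
  by apply: (v_half (sqrE _)); apply: hr.
have [E [C [es hodd' hev hC]]] := sq_decomp s.
exists s; split; last first.
  move=> i hi; rewrite coef_poly; case: ifP => // _.
  by rewrite nth_default ?sqr0 //; apply: leq_trans hi; rewrite -addnn leq_addr.
have -> : (h - (q + s) ^+ 2 = (rho - E) - C *+ 2 - (q * s) *+ 2)%R.
  by rewrite eh sqrrD es; ring.
apply: gt_sub; first apply: gt_sub.
- move=> k; rewrite coefB.
  case: (boolP (odd k)) => hk.
    by rewrite hodd' // subr0; apply: hodd.
  have ek : k = (k./2).*2 by rewrite -{1}(odd_double_half k) (negbTE hk) add0n.
  rewrite ek hev coef_poly; case: ifP => hlt.
    by rewrite sqrE subrr v0 ltey.
  rewrite expr2 mul0r subr0 nth_default ?v0 ?ltey //.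
  by move/negbT: hlt; rewrite -leqNgt => hl; apply: leq_trans hl _; rewrite -addnn leq_addr.
- apply: gt_ge_mono (ge_2 (hC _ hs)) _; exact: ar_AC2.
- apply: gt_ge_mono (ge_2 (ge_mul hq hs)) _; exact: ar_AC1.
Qed.

Lemma uphalf_ge n : (n <= (uphalf n).*2)%N.
Proof.
have := odd_double_half n.+1; rewrite uphalfE.
move: (odd n.+1) => b; move: (n.+1./2) => m; case: b => /= e; lia.
Qed.

Lemma TR h Q a tau : ge Q (a / 2) -> (tau < 2 * w2)%R ->
  gt (h - Q ^+ 2)%R (a + tau) ->
  exists Q' : {poly F}, (size Q' <= (uphalf (size h).-1).+1)%N /\ gt (h - Q' ^+ 2)%R (a + tau).
Proof.
move=> hQ t2 hgt.
set L := (a + tau)%R.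
set B := (uphalf (size h).-1).+1.
set Ql := (\poly_(i < B) Q`_i)%R.
set Qh := (Q - Ql)%R.
have cQh j : Qh`_j = (if (j < B)%N then 0%R else Q`_j).
  by rewrite coefB coef_poly; case: ifP => _; rewrite ?subrr ?subr0.
have hQl : ge Ql (a / 2).
  by move=> j; rewrite coef_poly; case: ifP => _; [apply: hQ | rewrite v0 leey].
have sQl : (size Ql <= B)%N by apply: size_poly.
have eQ : (Q ^+ 2 = Ql ^+ 2 + (Ql * Qh) *+ 2 + Qh ^+ 2)%R.
  by rewrite -sqrrD /Qh addrC subrK.
have gtQh : gt Qh (L / 2).
  case: (boolP ((L / 2)%:E < gaussv v Qh)) => [/gaussv_gt //|hn].
  exfalso.
  have Qhn0 : Qh != 0%R.
    by apply/eqP => hz; move: hn; rewrite hz /gaussv size_poly0 big_ord0 ltey.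
  have [e [he ge_e]] := exists_val Qhn0.
  have eL : (e <= L / 2)%R by rewrite -lee_fin -ge_e leNgt.
  have exP : exists n, v Qh`_n == e%:E by case: he => _ [n hn0]; exists n; apply/eqP.
  have ubP : forall n, v Qh`_n == e%:E -> (n <= size Qh)%N.
    move=> n /eqP hn1; rewrite leqNgt; apply/negP => hl.
    by move: hn1; rewrite nth_default ?v0 // ltnW.
  case: (ex_maxnP exP ubP) => k /eqP hk mk.
  have kB : (B <= k)%N.
    rewrite leqNgt; apply/negP => hl; move: hk; rewrite cQh hl v0 => //.
  have gtk j : (k < j)%N -> e%:E < v Qh`_j.
    move=> hj; rewrite lt_neqAle (proj1 he j) andbT; apply/negP => /eqP ej.
    by have := mk j (introT eqP (esym ej)); rewrite leqNgt hj.
  have hh : h`_(k.*2) = 0%R.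
    apply: nth_default; have := uphalf_ge (size h).-1; rewrite -/B in kB.
    move: kB; rewrite /B => kB hu; case: (size h) hu kB => [//|n] /= hu kB.
    rewrite -addnn; lia.
  have c1 : (Ql ^+ 2)%R`_(k.*2) = 0%R.
    apply: nth_default; rewrite expr2; apply: leq_trans (size_polyMleq _ _) _.
    rewrite -addnn; lia.
  have c2 : (e + e)%:E < v ((Ql * Qh) *+ 2)%R`_(k.*2).
    rewrite coefMn -mulr_natl vM hw2.
    have : (a / 2 + e)%:E < v (Ql * Qh)%R`_(k.*2).
      rewrite coefM; apply: vsum_gt => j _.
      rewrite coef_poly; case: ifP => hj; last by rewrite mul0r v0 ltey.
      apply: vM_gt; first exact: hQ.
      apply: gtk; move: (ltn_ord j) hj kB; move: (nat_of_ord j) => jj; lia.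
    move=> hlt; apply: le_lt_trans (addgt (lexx (w2%:E)) hlt).
    rewrite lee_fin; exact: ar_TR1 eL t2.
  have c3 : v (Qh ^+ 2)%R`_(k.*2) = (e + e)%:E.
    rewrite expr2 coefM.
    have hkk : (k < (k.*2).+1)%N by rewrite ltnS -addnn leq_addr.
    have ek : (k.*2 - k = k)%N by rewrite -addnn addnK.
    rewrite (bigD1 (Ordinal hkk)) //= ek.
    apply: vD_eq; first by rewrite vM hk.
    apply: vsum_gt => j hj.
    have hj' : (nat_of_ord j) != k by apply/eqP => e'; move: hj => /eqP; apply; apply: val_inj.
    have [lt|gt'] := ltnP j k.
      apply: vM_gt; first exact: (proj1 he).
      apply: gtk; move: (ltn_ord j) lt; move: (nat_of_ord j) => jj; lia.
    have lt : (k < j)%N by rewrite ltn_neqAle eq_sym hj' gt'.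
    apply: vM_gt'; first exact: gtk.
    exact: (proj1 he).
  have : v (h - Q ^+ 2)%R`_(k.*2) = (e + e)%:E.
    rewrite coefB hh sub0r vN eQ addrC coefD.
    apply: vD_eq => //; rewrite coefD c1 add0r; exact: c2.
  move=> hv'; have := hgt k.*2; rewrite hv' lte_fin.
  have := ar_TR3 eL; rewrite -/L => h1 h2.
  by move: (lt_le_trans h2 h1); rewrite ltxx.
exists Ql; split => //.
have -> : (h - Ql ^+ 2 = (h - Q ^+ 2) + (Ql * Qh) *+ 2 + Qh ^+ 2)%R by rewrite eQ; ring.
apply: gt_add; first apply: gt_add => //.
  apply: gt_mono (gt_2 (gt_mul hQl gtQh)) _; apply: ltW; exact: ar_AC1.
rewrite expr2; apply: gt_mono (gt_mul' gtQh (gt_ge gtQh)) _; exact: ar_half2.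
Qed.

Definition oddp (f : {poly F}) : {poly F} := (\poly_(i < size f) (if odd i then f`_i else 0))%R.

Lemma coef_oddp f j : (oddp f)`_j = (if odd j then f`_j else 0%R).
Proof.
rewrite coef_poly; case: ifP => // /negbT; rewrite -leqNgt => hj.
by case: ifP => // _; rewrite nth_default.
Qed.

Lemma oddp_mul (f E : {poly F}) k : (forall k, odd k -> E`_k = 0%R) ->
  (f * E)%R`_k = (if odd k then (oddp f * E)%R`_k else (f * E)%R`_k) /\
  (~~ odd k -> (oddp f * E)%R`_k = 0%R).
Proof.
move=> hE; split.
  case: ifP => // hk; rewrite !coefM; apply: eq_bigr => j _.
  rewrite coef_oddp; case: ifP => // hj.
  have hjk : (j <= k)%N by rewrite -ltnS.
  by rewrite hE ?mulr0 // oddB // hk hj.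
move=> hk; rewrite coefM; apply: big1 => j _.
rewrite coef_oddp; case: ifP => hj; last by rewrite mul0r.
have hjk : (j <= k)%N by rewrite -ltnS.
by rewrite hE ?mulr0 // oddB // hj (negbTE hk).
Qed.

Lemma OE (f E : {poly F}) e l : (forall k, odd k -> E`_k = 0%R) -> val_at E e ->
  oddsmall (f * E)%R (l + e) <-> oddsmall f l.
Proof.
move=> hE he; split => h.
  have go : gt (oddp f) l.
    case: (boolP (l%:E < gaussv v (oddp f))) => [/gaussv_gt //|hn].
    exfalso.
    have on0 : oddp f != 0%R.
      by apply/eqP => hz; move: hn; rewrite hz /gaussv size_poly0 big_ord0 ltey.
    have [m [hm gm]] := exists_val on0.
    have ml : (m <= l)%R by rewrite -lee_fin -gm leNgt.
    have [_ [k hk]] := gauss_exact hm he.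
    have [e1 e2] := oddp_mul f k hE.
    case: (boolP (odd k)) => hodd.
      move: (h k hodd); rewrite e1 hodd hk lte_fin.
      by rewrite ltNge lerD2r ml.
    by move: hk; rewrite e2 // v0.
  move=> k hk; have := go k; rewrite coef_oddp hk //.
move=> k hk; have [e1 _] := oddp_mul f k hE; rewrite e1 hk.
have go : gt (oddp f) l.
  by move=> j; rewrite coef_oddp; case: ifP => hj; [apply: h | rewrite v0 ltey].
exact: (gt_mul' go (proj1 he)).
Qed.

Lemma oddsmall_add f Y L : gt Y L -> (oddsmall (f + Y)%R L <-> oddsmall f L).
Proof.
move=> hY; split => h k hk.
  have := vB_gt (h k hk) (hY k); by rewrite coefD addrK.
by rewrite coefD; apply: vD_gt => //; apply: h.
Qed.

Lemma val_at_sub f g x : val_at f x -> gt g x -> val_at (f - g)%R x.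
Proof.
move=> [hf [i hi]] hg; split; first by apply: ge_sub => //; apply: gt_ge.
by exists i; rewrite coefB; apply: vD_eq => //; rewrite vN.
Qed.

Lemma TRANS rho rho0 Hp Qp X L0 Ap tau :
  ge rho0 L0 -> val_at Hp Ap -> gt (Hp - Qp ^+ 2)%R (Ap + tau) -> (0 <= tau)%R ->
  gt X (L0 + Ap) -> rho = (rho0 * Hp + X)%R ->
  oddsmall rho (L0 + Ap) <-> oddsmall rho0 L0.
Proof.
move=> hr0 hH hR t0 hX erho.
set R'' := (Hp - Qp ^+ 2)%R.
have gR : gt R'' Ap by apply: gt_mono hR _; rewrite lerDl.
have vQ2 : val_at (Qp ^+ 2)%R Ap.
  by have := val_at_sub hH gR; rewrite /R'' opprB addrC subrK.
have vQ := val_at_half vQ2.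
have [E [C [es hodd hev hC]]] := sq_decomp Qp.
have vE : val_at E Ap.
  split.
    move=> k; case: (boolP (odd k)) => hk; first by rewrite hodd // v0 leey.
    have ek : k = (k./2).*2 by rewrite -{1}(odd_double_half k) (negbTE hk) add0n.
    rewrite ek hev expr2 -(ar_hh Ap); apply: vM_ge; exact: (proj1 vQ).
  case: vQ => _ [i hi]; exists i.*2; rewrite hev expr2 vM hi -EFinD ar_hh //.
have gC := hC _ (proj1 vQ).
have e2 : rho = (rho0 * E + (X + rho0 * R'' + rho0 * (C *+ 2)))%R.
  by rewrite erho /R'' es; ring.
rewrite e2 oddsmall_add; first exact: OE.
apply: gt_add; first apply: gt_add => //.
  exact: gt_mul.
apply: gt_ge_mono (ge_mul hr0 (ge_2 gC)) _; exact: ar_TRANS.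
Qed.

Lemma ge_eq f x y : ge f x -> x = y -> ge f y.
Proof. by move=> h <-. Qed.

Lemma gt_eq f x y : gt f x -> x = y -> gt f y.
Proof. by move=> h <-. Qed.

Lemma val_at_1 : val_at 1%R 0.
Proof. by split; [exact: ge_1 | exists 0%N; rewrite coefC /= v1]. Qed.

Lemma EPL (I : Type) (s : seq I) (P : pred I) (hs : I -> {poly F}) (a : I -> rat) :
  (forall i, P i -> val_at (hs i) (a i)) ->
  val_at (\prod_(i <- s | P i) hs i)%R (\sum_(i <- s | P i) a i)%R.
Proof.
move=> h; elim: s => [|x s IH]; first by rewrite !big_nil; exact: val_at_1.
rewrite !big_cons; case: ifP => // Px; exact: gauss_exact (h x Px) IH.
Qed.

Lemma PL (I : Type) (s : seq I) (P : pred I) (hs qs : I -> {poly F}) (a : I -> rat) r :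
  (forall i, P i -> ge (hs i) (a i)) -> (forall i, P i -> ge (qs i ^+ 2)%R (a i)) ->
  (forall i, P i -> ge (hs i - qs i ^+ 2)%R (a i + r)) ->
  [/\ ge (\prod_(i <- s | P i) hs i)%R (\sum_(i <- s | P i) a i)%R,
      ge ((\prod_(i <- s | P i) qs i) ^+ 2)%R (\sum_(i <- s | P i) a i)%R &
      ge (\prod_(i <- s | P i) hs i - (\prod_(i <- s | P i) qs i) ^+ 2)%R
         ((\sum_(i <- s | P i) a i) + r)%R].
Proof.
move=> h1 h2 h3; elim: s => [|x s [IH1 IH2 IH3]].
  rewrite !big_nil expr1n subrr; split; [exact: ge_1 | exact: ge_1 | exact: ge0].
rewrite !big_cons; case: ifP => Px; last by split.
split.
- exact: ge_mul (h1 x Px) IH1.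
- by rewrite exprMn; exact: ge_mul (h2 x Px) IH2.
- set H := (\prod_(i <- s | P i) hs i)%R; set Q := (\prod_(i <- s | P i) qs i)%R.
  have -> : (hs x * H - (qs x * Q) ^+ 2 = (hs x - qs x ^+ 2) * H + qs x ^+ 2 * (H - Q ^+ 2))%R.
    by rewrite exprMn; ring.
  apply: ge_add.
    by apply: ge_eq (ge_mul (h3 x Px) IH1) _; ring.
  by apply: ge_eq (ge_mul (h2 x Px) IH3) _; ring.
Qed.

Lemma PLgt (I : Type) (s : seq I) (P : pred I) (hs qs : I -> {poly F}) (a : I -> rat) r :
  (forall i, P i -> ge (hs i) (a i)) -> (forall i, P i -> ge (qs i ^+ 2)%R (a i)) ->
  (forall i, P i -> gt (hs i - qs i ^+ 2)%R (a i + r)) ->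
  gt (\prod_(i <- s | P i) hs i - (\prod_(i <- s | P i) qs i) ^+ 2)%R
     ((\sum_(i <- s | P i) a i) + r)%R.
Proof.
move=> h1 h2 h3.
have [IH1 _ _] := @PL I s P hs qs a r h1 h2 (fun i Pi => gt_ge (h3 i Pi)).
elim: s IH1 => [|x s IH] IH1.
  by rewrite !big_nil expr1n subrr; exact: gt0.
move: IH1; rewrite !big_cons; case: ifP => // Px.
have [G1 G2 _] := @PL I s P hs qs a r h1 h2 (fun i Pi => gt_ge (h3 i Pi)).
move=> _.
set H := (\prod_(i <- s | P i) hs i)%R; set Q := (\prod_(i <- s | P i) qs i)%R.
have -> : (hs x * H - (qs x * Q) ^+ 2 = (hs x - qs x ^+ 2) * H + qs x ^+ 2 * (H - Q ^+ 2))%R.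
  by rewrite exprMn; ring.
apply: gt_add.
  by apply: gt_eq (gt_mul' (h3 x Px) G1) _; ring.
by apply: gt_eq (gt_mul (h2 x Px) (IH G1)) _; ring.
Qed.


Lemma T1 (h rho : {poly F}) a r : val_at h a -> (r%:E <= tqr v h rho) <-> ge rho (a + r).
Proof. by move=> hh; rewrite /tqr (val_at_gaussv hh) le_subE addrC; exact: gaussv_ge. Qed.

Lemma T2 (h rho : {poly F}) a r : val_at h a -> (r%:E < tqr v h rho) <-> gt rho (a + r).
Proof. by move=> hh; rewrite /tqr (val_at_gaussv hh) lt_subE addrC; exact: gaussv_gt. Qed.

Lemma notgt (f : {poly F}) x : ~ gt f x -> exists k, v f`_k <= x%:E.
Proof.
move=> hn; have [fz|fn0] := eqVneq f 0%R.
  by exfalso; apply: hn; rewrite fz; exact: gt0.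
have [k hk] := gaussv_attained fn0; exists k; rewrite -hk leNgt.
by apply/negP => /gaussv_gt.
Qed.

Lemma T3 (h rho : {poly F}) a r : val_at h a -> (exists k, v rho`_k <= (a + r)%:E) ->
  tqr v h rho <= r%:E.
Proof.
move=> hh [k hk]; rewrite leNgt; apply/negP => /(T2 _ _ hh) hg.
by have := lt_le_trans (hg k) hk; rewrite ltxx.
Qed.

Lemma T4 (h rho : {poly F}) a tau : val_at h a -> tqr v h rho = tau%:E -> val_at rho (a + tau).
Proof.
move=> hh et; have g1 : ge rho (a + tau) by apply/(T1 _ _ hh); rewrite et.
split => //.
have [k hk] : exists k, v rho`_k <= (a + tau)%:E.
  by apply: notgt => /(T2 _ _ hh); rewrite et ltxx.
by exists k; apply/eqP; rewrite eq_le hk g1.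
Qed.

Lemma notodd (f : {poly F}) L : ~ oddsmall f L -> exists k, odd k /\ v f`_k <= L%:E.
Proof.
move=> hn.
case: (boolP (L%:E < gaussv v (oddp f))) => [/gaussv_gt go|hl].
  by exfalso; apply: hn => k hk; have := go k; rewrite coef_oddp hk.
have on0 : oddp f != 0%R.
  by apply/eqP => hz; move: hl; rewrite hz /gaussv size_poly0 big_ord0 ltey.
have [k hk] := gaussv_attained on0.
move: hl; rewrite -leNgt hk coef_oddp; case: ifP => hodd.
  by move=> h'; exists k.
by rewrite v0 leNgt ltey.
Qed.

Lemma oddex (f : {poly F}) L k : odd k -> v f`_k <= L%:E -> ~ oddsmall f L.
Proof. by move=> hk hl ho; have := lt_le_trans (ho k hk) hl; rewrite ltxx. Qed.

Lemma GOOD (h Q rho : {poly F}) a tau : val_at h a -> h = (Q ^+ 2 + rho)%R ->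
  tqr v h rho = tau%:E -> (0 <= tau)%R -> (tau < 2 * w2)%R ->
  (good v h Q rho <-> ~ oddsmall rho (a + tau)).
Proof.
move=> hh eh et t0 t2.
have hr : ge rho (a + tau) by apply/(T1 _ _ hh); rewrite et.
have hQ2 : ge (Q ^+ 2)%R a.
  have -> : (Q ^+ 2 = h - rho)%R by rewrite eh addrK.
  by apply: ge_sub; [exact: (proj1 hh) | apply: ge_mono hr _; rewrite lerDl].
have hQ := ge_half hQ2.
have t2E : tqr v h rho < 2%:E * v 2%R by rewrite et hw2 -EFinM lte_fin.
split.
  move=> [_ [hge|[_ hno]]] hodd.
    by have := lt_le_trans t2E hge; rewrite ltxx.
  have [s [hs _]] := AC eh hQ hr hodd t2.
  have hQs : ge (Q + s)%R (a / 2).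
    apply: ge_half.
    have -> : ((Q + s) ^+ 2 = h - (h - (Q + s) ^+ 2))%R by ring.
    apply: ge_sub; first exact: (proj1 hh).
    by apply: ge_mono (gt_ge hs) _; rewrite lerDl.
  have [Q' [sQ' hQ']] := TR hQs t2 hs.
  apply: hno; exists Q', (h - Q' ^+ 2)%R; split.
    by split => //; rewrite addrC subrK.
  by rewrite et; apply/(T2 _ _ hh).
move=> hn; split => //; right; split => // -[q' [rho' [[e' _] hlt]]].
move: hlt; rewrite et => /(T2 _ _ hh) hr'.
have hq' : ge q' (a / 2).
  apply: ge_half.
  have -> : (q' ^+ 2 = h - rho')%R by rewrite e' addrK.
  apply: ge_sub; first exact: (proj1 hh).
  by apply: ge_mono (gt_ge hr') _; rewrite lerDl.
apply: hn; exact: NA eh e' hQ hq' hr hr' t0 t2.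
Qed.

End W2.
End Val.

Section Roots.
Variable F : closedFieldType.
Variable v : F -> \bar rat.
Hypothesis hv : is_valuation v.

Lemma coef_XsubCM (z : F) (P : {poly F}) j :
  (('X - z%:P) * P)%R`_j = ((if j == 0%N then 0 else P`_j.-1) - z * P`_j)%R.
Proof. by rewrite mulrBl coefB coefXM coefCM. Qed.

Lemma RL1aux (rs : seq F) : (forall z, z \in rs -> 0%:E < v z) ->
  v (\prod_(z <- rs) ('X - z%:P))%R`_(size rs) = 0%:E /\
  forall j, j != size rs -> 0%:E < v (\prod_(z <- rs) ('X - z%:P))%R`_j.
Proof.
elim: rs => [|z rs IH] hz.
  rewrite big_nil; split; first by rewrite coefC /= (v1 hv).
  by move=> j hj; rewrite coefC; case: j hj => // j _ /=; rewrite (v0 hv) ltey.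
have [IH1 IH2] := IH (fun y hy => hz y (mem_behead (s:=z :: rs) hy)).
have hz0 : 0%:E < v z by apply: hz; rewrite inE eqxx.
set P := (\prod_(z <- rs) ('X - z%:P))%R.
have Pge j : 0%:E <= v P`_j.
  by case: (eqVneq j (size rs)) => [->|/IH2 /ltW //]; rewrite IH1.
have hzP j : 0%:E < v (z * P`_j)%R.
  by have := vM_gt' hv hz0 (Pge j); rewrite addr0.
rewrite big_cons -/P /=; split.
  rewrite coef_XsubCM /=; apply: (vD_eq hv) => //; by rewrite (vN hv).
move=> j hj; rewrite coef_XsubCM.
case: j hj => [|j] hj /=.
  by rewrite sub0r (vN hv).
apply: (vB_gt hv) => //; apply: IH2; by move: hj; rewrite eqSS.
Qed.

Lemma RL1 (h : {poly F}) : h != 0%R -> (forall s, root h s -> 0%:E < v s) ->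
  exists a1 : rat, v h`_((size h).-1) = a1%:E /\
    (forall j, j != (size h).-1 -> a1%:E < v h`_j).
Proof.
move=> hn0 hroot; case: (closed_field_poly_normal h) => rs eh.
have lc0 : lead_coef h != 0%R by rewrite lead_coef_eq0.
have hrs : forall z, z \in rs -> 0%:E < v z.
  move=> z hz; apply: hroot; rewrite eh rootZ // root_prod_XsubC //.
have [a1 ha1] := vfin hv lc0.
have sh : (size h).-1 = size rs by rewrite eh size_scale // size_prod_XsubC.
have [P1 P2] := RL1aux hrs.
exists a1; split.
  by rewrite sh eh coefZ (vM hv) ha1 P1 adde0.
move=> j; rewrite sh => hj; rewrite eh coefZ (vM hv) ha1.
by have := addgt (lexx (a1%:E)) (P2 j hj); rewrite addr0.
Qed.

Lemma RL2aux (rs : seq F) : (forall z, z \in rs -> v z < 0%:E) ->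
  exists b : rat, v (\prod_(z <- rs) ('X - z%:P))%R`_0 = b%:E /\
  forall j, (0 < j)%N -> b%:E < v (\prod_(z <- rs) ('X - z%:P))%R`_j.
Proof.
elim: rs => [|z rs IH] hz.
  exists 0%R; rewrite big_nil; split; first by rewrite coefC /= (v1 hv).
  by move=> j hj; rewrite coefC; case: j hj => // j _ /=; rewrite (v0 hv) ltey.
have [b [IH1 IH2]] := IH (fun y hy => hz y (mem_behead (s:=z :: rs) hy)).
have hz0 : v z < 0%:E by apply: hz; rewrite inE eqxx.
have zn0 : z != 0%R by apply/eqP => e; move: hz0; rewrite e (v0 hv).
have [c hc] := vfin hv zn0.
have c0 : (c < 0)%R by rewrite -lte_fin -hc.
set P := (\prod_(z <- rs) ('X - z%:P))%R.
have Pge j : b%:E <= v P`_j.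
  by case: j => [|j]; [rewrite IH1 | apply/ltW/IH2].
exists (c + b)%R; rewrite big_cons -/P; split.
  by rewrite coef_XsubCM /= sub0r (vN hv) (vM hv) hc IH1.
move=> j hj; rewrite coef_XsubCM; case: j hj => [//|j] _ /=.
apply: (vB_gt hv).
  apply: lt_le_trans (Pge j); rewrite lte_fin; by rewrite gtrDr.
rewrite (vM hv) hc; apply: (addgt (lexx _)); exact: IH2.
Qed.

Lemma RL2 (h : {poly F}) : h != 0%R -> (forall s, root h s -> v s < 0%:E) ->
  exists a2 : rat, v h`_0 = a2%:E /\ (forall j, (0 < j)%N -> a2%:E < v h`_j).
Proof.
move=> hn0 hroot; case: (closed_field_poly_normal h) => rs eh.
have lc0 : lead_coef h != 0%R by rewrite lead_coef_eq0.
have hrs : forall z, z \in rs -> v z < 0%:E.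
  move=> z hz; apply: hroot; rewrite eh rootZ // root_prod_XsubC //.
have [a1 ha1] := vfin hv lc0.
have [b [P1 P2]] := RL2aux hrs.
exists (a1 + b)%R; split.
  by rewrite eh coefZ (vM hv) ha1 P1.
move=> j hj; rewrite eh coefZ (vM hv) ha1.
exact: addgt (lexx (a1%:E)) (P2 j hj).
Qed.

End Roots.


Theorem proposition3p16 (Kbar : closedFieldType) (K : {pred Kbar})
  (v : Kbar -> \bar rat) (S : setting K v)
  (N : nat) (hs qs rhos : 'I_N -> {poly Kbar}) :
  (forall i, hs i != 0%R) ->
  (forall i, part_square (hs i) (qs i) (rhos i)) ->
  (forall i, 0 <= tqr v (hs i) (rhos i)) ->
  let h := (\prod_(i < N) hs i)%R in
  let q := (\prod_(i < N) qs i)%R in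
  let rho := (h - q ^+ 2)%R in
  let tmin := \big[Order.min/+oo]_(i < N) tqr v (hs i) (rhos i) in
  tmin <= tqr v h rho /\
  (forall i0 : 'I_N,
     (forall j : 'I_N, j != i0 -> tqr v (hs i0) (rhos i0) < tqr v (hs j) (rhos j)) ->
     tqr v h rho = tmin /\ (good v h q rho <-> good v (hs i0) (qs i0) (rhos i0))) /\
  ((N = 2)%N -> forall i1 i2 : 'I_N, nat_of_ord i1 = 0%N -> nat_of_ord i2 = 1%N ->
     (forall s, root (hs i1) s -> 0 < v s) ->
     (forall s, root (hs i2) s -> v s < 0) ->
     good v (hs i1) (qs i1) (rhos i1) -> good v (hs i2) (qs i2) (rhos i2) ->
     tmin < 2%:E * v 2%R ->
     tqr v h rho = tmin /\ good v h q rho).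

Proof.
move=> hnz hps ht0 h q rho tmin.
have hv := v_val S.
have two0 : (2%:R : Kbar) != 0%R by rewrite ((pcharf0P _).1 (char0 S) 2%N).
have [w2 hw2] := vfin hv two0.
have w2pos : (0 < w2)%R by have := residue_char2 S; rewrite hw2 lte_fin.
have hsqrt : forall x : Kbar, exists y, (y ^+ 2)%R = x.
  move=> x; have : size ('X^2 - x%:P : {poly Kbar})%R != 1%N by rewrite size_XnsubC.
  move/closed_rootP => [y hy]; exists y; move: hy.
  by rewrite /root !hornerE subr_eq0 => /eqP.
pose a := fun i => fine (gaussv v (hs i)).
have va : forall i, val_at v (hs i) (a i).
  move=> i; have [x [hx gx]] := exists_val hv (hnz i).
  by rewrite /a gx.
have erho : forall i, rhos i = (hs i - qs i ^+ 2)%R.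
  by move=> i; case: (hps i) => -> _; ring.
have hq2 : forall i, ge v (qs i ^+ 2)%R (a i).
  move=> i; have : ge v (rhos i) (a i + 0) by apply/(T1 hv _ _ (va i)); exact: ht0.
  rewrite addr0 => hr; have -> : (qs i ^+ 2 = hs i - rhos i)%R by rewrite erho; ring.
  by apply: (ge_sub hv) => //; exact: (proj1 (va i)).
pose A := (\sum_(i < N) a i)%R.
have vh : val_at v h A by apply: (EPL hv) => i _; exact: va.
have P1 : tmin <= tqr v h rho.
  apply: le_by_rat => r hr.
  have hri : forall i, ge v (hs i - qs i ^+ 2)%R (a i + r).
    move=> i; rewrite -erho; apply/(T1 hv _ _ (va i)).
    by move/bigmin_geP: hr => [_ ->].
  have [_ _ G] := @PL _ _ hv _ (index_enum 'I_N) (fun _ => true) hs qs a r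
     (fun i _ => proj1 (va i)) (fun i _ => hq2 i) (fun i _ => hri i).
  by apply/(T1 hv _ _ vh); exact: G.
have ehq : h = (q ^+ 2 + rho)%R by rewrite /rho addrC subrK.
have PA : forall i0 : 'I_N,
     (forall j : 'I_N, j != i0 -> tqr v (hs i0) (rhos i0) < tqr v (hs j) (rhos j)) ->
     tqr v h rho = tmin /\ (good v h q rho <-> good v (hs i0) (qs i0) (rhos i0)).
  move=> i0 hmin.
  have etmin : tmin = tqr v (hs i0) (rhos i0).
    apply/eqP; rewrite eq_le; apply/andP; split.
      exact: (bigmin_le _ i0 (fun i => tqr v (hs i) (rhos i))).
    apply/bigmin_geP; split; first exact: leey.
    move=> j _; case: (eqVneq j i0) => [->|hj]; first exact: lexx.
    exact: ltW (hmin j hj).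
  pose Hp := (\prod_(i | true && (i != i0)) hs i)%R.
  pose Qp := (\prod_(i | true && (i != i0)) qs i)%R.
  pose Ap := (\sum_(i | true && (i != i0)) a i)%R.
  have eh : h = (hs i0 * Hp)%R by rewrite /h (bigD1 i0).
  have eq : q = (qs i0 * Qp)%R by rewrite /q (bigD1 i0).
  have vHp : val_at v Hp Ap by apply: (EPL hv) => i _; exact: va.
  have vh' : val_at v h (a i0 + Ap) by rewrite eh; exact: (gauss_exact hv (va i0) vHp).
  have goodh : h = (q ^+ 2 + rho)%R /\ 2%:E * v 2%R <= tqr v h rho -> good v h q rho.
    by move=> [e1 e2]; split => //; left.
  have goodi : 2%:E * v 2%R <= tqr v (hs i0) (rhos i0) -> good v (hs i0) (qs i0) (rhos i0).
    by move=> e2; split; [exact: (proj1 (hps i0)) | left].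
  have ti0 := ht0 i0.
  case E0: (tqr v (hs i0) (rhos i0)) => [tau||]; last by rewrite E0 in ti0.
    have t0 : (0 <= tau)%R by move: ti0; rewrite E0 lee_fin.
    have vr0 : val_at v (rhos i0) (a i0 + tau) := T4 hv (va i0) E0.
    have hgtj : forall j, true && (j != i0) -> gt v (hs j - qs j ^+ 2)%R (a j + tau).
      move=> j /= hj; rewrite -erho; apply/(T2 hv _ _ (va j)).
      by rewrite -E0; exact: hmin.
    have GPL : gt v (Hp - Qp ^+ 2)%R (Ap + tau).
      exact: (@PLgt _ _ hv _ (index_enum 'I_N) (fun i => true && (i != i0)) hs qs a tau
        (fun i _ => proj1 (va i)) (fun i _ => hq2 i) hgtj).
    pose X := (qs i0 ^+ 2 * (Hp - Qp ^+ 2))%R.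
    have gX : gt v X (a i0 + tau + Ap).
      by apply: (gt_eq (gt_mul hv (hq2 i0) GPL)); ring.
    have erho' : rho = (rhos i0 * Hp + X)%R.
      by rewrite /rho /X eh eq erho exprMn; ring.
    have vP := gauss_exact hv vr0 vHp.
    have et : tqr v h rho = tau%:E.
      apply/eqP; rewrite eq_le; apply/andP; split; last by rewrite -E0 -etmin.
      apply: (T3 hv vh').
      case: vP => _ [k hk]; exists k.
      rewrite erho' coefD (vD_eq hv hk (gX k)).
      by have -> : (a i0 + Ap + tau = a i0 + tau + Ap)%R by ring.
    split; first by rewrite et etmin E0.
    have [t2|t2] := ltP tau (2 * w2)%R; last first.
      have hle : 2%:E * v 2%R <= tau%:E by rewrite hw2 -EFinM lee_fin.
      by split => _; [apply: goodi; rewrite E0 | apply: goodh; split => //; rewrite et].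
    rewrite (GOOD hv hw2 w2pos hsqrt vh' ehq et t0 t2).
    rewrite (GOOD hv hw2 w2pos hsqrt (va i0) (proj1 (hps i0)) E0 t0 t2).
    have -> : (a i0 + Ap + tau = a i0 + tau + Ap)%R by ring.
    have tr := TRANS hv hw2 w2pos (proj1 vr0) vHp GPL t0 gX erho'.
    by split => hn ho; apply: hn; [apply/tr | apply/tr].
  have et : tqr v h rho = tmin.
    apply/eqP; rewrite eq_le P1 andbT etmin E0.
    exact: leey.
  split => //.
  have thr : tqr v h rho = +oo by rewrite et etmin E0.
  by split => _; [apply: goodi; rewrite E0 leey | apply: goodh; split => //; rewrite thr leey].
split; first exact: P1.
split; first exact: PA.
move=> N2 i1 i2 e1 e2 hr1 hr2 g1 g2 tlt.
have hj : forall j : 'I_N, j = i1 \/ j = i2.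
  move=> [m hm]; have : (m < 2)%N by rewrite -N2.
  case: m hm => [|[|m]] hm h2; [left | right | by move: h2; rewrite !ltnS ltn0]; by apply: val_inj => /=; rewrite ?e1 ?e2.
have i12 : i1 != i2 by apply/eqP => e; move: e1; rewrite e e2.
have hmin1 : forall j : 'I_N, j != i1 -> j = i2.
  by move=> j hj1; case: (hj j) => // e; rewrite e eqxx in hj1.
have hmin2 : forall j : 'I_N, j != i2 -> j = i1.
  by move=> j hj1; case: (hj j) => // e; rewrite e eqxx in hj1.
have [lt12|lt21|eq12] := ltgtP (tqr v (hs i1) (rhos i1)) (tqr v (hs i2) (rhos i2)).
- have [|et eg] := PA i1; first by move=> j /hmin1 ->.
  by split => //; apply/eg.
- have [|et eg] := PA i2; first by move=> j /hmin2 ->.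
  by split => //; apply/eg.
have etmin : tmin = tqr v (hs i1) (rhos i1).
  apply/eqP; rewrite eq_le; apply/andP; split.
    exact: (bigmin_le _ i1 (fun i => tqr v (hs i) (rhos i))).
  apply/bigmin_geP; split; first exact: leey.
  by move=> j _; case: (hj j) => ->; rewrite ?eq12 lexx.
have t1 := ht0 i1.
case E1: (tqr v (hs i1) (rhos i1)) => [tau||]; last by rewrite E1 in t1.
  2: by move: tlt; rewrite etmin E1 ltNge leey.
have E2 : tqr v (hs i2) (rhos i2) = tau%:E by rewrite -eq12.
have t0 : (0 <= tau)%R by move: t1; rewrite E1 lee_fin.
have t2 : (tau < 2 * w2)%R by move: tlt; rewrite etmin E1 hw2 -EFinM lte_fin.
have pred2 : forall j : 'I_N, (true && (j != i1)) = (j == i2).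
  move=> j /=; case: (hj j) => ->; rewrite ?eqxx //.
    by rewrite (negbTE i12).
  by rewrite eq_sym i12.
have eh : h = (hs i1 * hs i2)%R by rewrite /h (bigD1 i1) //= (big_pred1 i2 pred2).
have eq : q = (qs i1 * qs i2)%R by rewrite /q (bigD1 i1) //= (big_pred1 i2 pred2).
have [b1 [Rb1 Rb2]] := RL1 hv (hnz i1) hr1.
have [b2 [Rc1 Rc2]] := RL2 hv (hnz i2) hr2.
set d1 := (size (hs i1)).-1 in Rb1 Rb2.
have vb1 : val_at v (hs i1) b1.
  split; last by exists d1.
  by move=> j; case: (eqVneq j d1) => [->|hjd]; [rewrite Rb1 | exact/ltW/Rb2].
have ea1 : a i1 = b1 := val_at_uniq hv (va i1) vb1.
have vb2 : val_at v (hs i2) b2.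
  split; last by exists 0%N.
  by case => [|j]; [rewrite Rc1 | exact/ltW/Rc2].
have ea2 : a i2 = b2 := val_at_uniq hv (va i2) vb2.
have vh2 : val_at v h (b1 + b2) by rewrite eh; exact: (gauss_exact hv vb1 vb2).
have vr1 := T4 hv (va i1) E1; rewrite ea1 in vr1.
have vr2 := T4 hv (va i2) E2; rewrite ea2 in vr2.
have hq1 : ge v (qs i1) (b1 / 2) by rewrite -ea1; apply: (ge_half hv (hq2 i1)).
have hrho : ge v rho (b1 + b2 + tau).
  by apply/(T1 hv rho tau vh2); rewrite -E1 -etmin.
have hqq : ge v (q ^+ 2)%R (b1 + b2).
  have -> : (q ^+ 2 = h - rho)%R by rewrite /rho; ring.
  apply: (ge_sub hv (proj1 vh2)); apply: (ge_mono hrho); by rewrite lerDl.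
have hQ := ge_half hv hqq.
suff [k [hk hvk]] : exists k, odd k /\ v rho`_k <= (b1 + b2 + tau)%:E.
  have et : tqr v h rho = tau%:E.
    apply/eqP; rewrite eq_le; apply/andP; split.
      by apply: (T3 hv vh2); exists k.
    by rewrite -E1 -etmin.
  split; first by rewrite et etmin E1.
  apply/(GOOD hv hw2 w2pos hsqrt vh2 ehq et t0 t2).
  exact: (oddex hk hvk).
have no1 : ~ oddsmall v (rhos i1) (b1 + tau).
  by rewrite -ea1; apply/(GOOD hv hw2 w2pos hsqrt (va i1) (proj1 (hps i1)) E1 t0 t2).
have [k [hk hvk]] := notodd hv no1.
have er1 : forall j, (rhos i1)`_j = ((hs i1)`_j - (qs i1 ^+ 2)%R`_j)%R.
  by move=> j; rewrite erho coefB.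
have hb1w : b1%:E < (w2 + (b1 / 2 + b1 / 2))%:E by rewrite lte_fin; exact: ar_lt_w.
case: (eqVneq tau 0%R) => [tz|tpos].
  rewrite tz addr0 in hvk *; rewrite addr0.
  have hk1 : v (hs i1)`_k <= b1%:E.
    rewrite leNgt; apply/negP => hlt.
    have := vB_gt hv hlt (lt_le_trans hb1w (sq_odd hv hw2 hq1 hk)).
    by rewrite -er1 => hh; move: (lt_le_trans hh hvk); rewrite ltxx.
  have kd : k = d1.
    apply/eqP; apply/negP => /negP hkd.
    by move: (lt_le_trans (Rb2 k hkd) hk1); rewrite ltxx.
  exists d1; split; first by rewrite -kd.
  have vhd : v h`_d1 = (b1 + b2)%:E.
    rewrite eh coefM.
    have hd : (d1 < d1.+1)%N by [].
    rewrite (bigD1 (Ordinal hd)) //= subnn.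
    apply: (vD_eq hv); first by rewrite (vM hv) Rb1 Rc1.
    apply: (vsum_gt hv) => j hjne.
    have hj' : (nat_of_ord j) != d1.
      by apply/eqP => e'; move: hjne => /eqP; apply; apply: val_inj.
    exact: (vM_gt' hv (Rb2 _ hj') (proj1 vb2 _)).
  rewrite /rho coefB (vD_eq hv vhd) //.
  rewrite (vN hv); apply: lt_le_trans (sq_odd hv hw2 hQ _); last by rewrite -kd.
  rewrite lte_fin; exact: ar_lt_w.
have tp : (0 < tau)%R by rewrite lt_neqAle eq_sym tpos t0.
have hbt : b1%:E < (b1 + tau)%:E by rewrite lte_fin; exact: ar_lt_pos.
have hvk' : v (rhos i1)`_k = (b1 + tau)%:E.
  by apply/eqP; rewrite eq_le hvk (proj1 vr1 k).
have d1even : ~~ odd d1.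
  apply/negP => hodd.
  have hq := sq_odd hv hw2 hq1 hodd.
  have e' : ((qs i1 ^+ 2)%R`_d1 = (hs i1)`_d1 - (rhos i1)`_d1)%R by rewrite er1; ring.
  have : v (qs i1 ^+ 2)%R`_d1 = b1%:E.
    rewrite e'; apply: (vD_eq hv Rb1); rewrite (vN hv).
    exact: lt_le_trans hbt (proj1 vr1 d1).
  move=> hh; move: (lt_le_trans hb1w hq); rewrite hh ltxx //.
have sh1 : size (hs i1) = d1.+1 by rewrite /d1 prednK // size_poly_gt0.
have sq1 : (size (qs i1) <= (uphalf d1).+1)%N by have := (proj2 (hps i1)).
have ud : ((uphalf d1).*2 = d1)%N := ud_lemma d1even.
have kd : (k < d1)%N.
  have rn0 : (rhos i1)`_k != 0%R by apply/eqP => ez; move: hvk'; rewrite ez (v0 hv).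
  have ks : (k < size (rhos i1))%N.
    by rewrite ltnNge; apply/negP => hs'; move: rn0; rewrite nth_default // eqxx.
  have s1 : (size (rhos i1) <= maxn (size (hs i1)) (size (qs i1 ^+ 2)%R))%N.
    by rewrite erho; apply: leq_trans (size_polyD _ _) _; rewrite size_polyN.
  have s2 : (size (qs i1 ^+ 2)%R <= (size (qs i1) + size (qs i1)).-1)%N.
    by rewrite expr2; exact: size_polyMleq.
  have kne : k != d1 by apply/eqP => ekd; move: hk; rewrite ekd (negbTE d1even).
  rewrite sh1 in s1; exact: kd_lemma ks s1 s2 sq1 ud kne.
have erho2 : rho = (rhos i1 * hs i2 + qs i1 ^+ 2 * rhos i2)%R.
  by rewrite /rho eh eq !erho exprMn; ring.
exists k; split => //.
rewrite erho2 coefD.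
have c1 : v (rhos i1 * hs i2)%R`_k = (b1 + tau + b2)%:E.
  rewrite coefM.
  have hkk : (k < k.+1)%N by [].
  rewrite (bigD1 (Ordinal hkk)) //= subnn.
  apply: (vD_eq hv); first by rewrite (vM hv) hvk' Rc1.
  apply: (vsum_gt hv) => j hjne.
  have hj' : (nat_of_ord j < k)%N.
    have := ltn_ord j; rewrite ltnS leq_eqVlt => /orP [/eqP e'|//].
    by move: hjne => /eqP; case; apply: val_inj.
  apply: (vM_gt hv (proj1 vr1 _)); apply: Rc2; by rewrite subn_gt0.
have c2 : (b1 + tau + b2)%:E < v (qs i1 ^+ 2 * rhos i2)%R`_k.
  rewrite coefM; apply: (vsum_gt hv) => j _.
  have jd : (nat_of_ord j) != d1.
    apply/eqP => ej; have := ltn_ord j; rewrite ltnS ej => hle.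
    by move: (leq_trans kd hle); rewrite ltnn.
  have hq : b1%:E < v (qs i1 ^+ 2)%R`_j.
    have -> : ((qs i1 ^+ 2)%R`_j = (hs i1)`_j - (rhos i1)`_j)%R by rewrite er1; ring.
    apply: (vB_gt hv (Rb2 _ jd)); exact: lt_le_trans hbt (proj1 vr1 _).
  have := vM_gt' hv hq (proj1 vr2 (k - j)%N).
  by have -> : (b1 + (b2 + tau) = b1 + tau + b2)%R by ring.
rewrite (vD_eq hv c1 c2).
by have -> : (b1 + tau + b2 = b1 + b2 + tau)%R by ring.
Qed.
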